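(* Neither of the real simple Lie algebras $so(3)$ and $sl(2,\mathbb R)$ admits a realization as a Lie algebra of Lie point symmetry generators of an equation $u_{tx}=g(t,x)u_x+f(t,x,u)$ with $g_x\neq0$, $f_{uu}\neq0$; that is, there are no three vector fields of the form $\tau(t)\partial_t+\xi(x)\partial_x+[h(t)u+r(t,x)]\partial_u$ that are symmetries of such an equation and satisfy the commutation relations of $so(3)$ or of $sl(2,\mathbb R)$.
   Context: Lie point symmetry generators of equations $u_{tx}=g(t,x)u_x+f(t,x,u)$ ($g_x\neq0$, $f_{uu}\neq0$) are vector fields of the form $\tau(t)\partial_t+\xi(x)\partial_x+[h(t)u+r(t,x)]\partial_u$. All functions are smooth and considerations are local. *)

(* Defs.v *)
From Stdlib Require Import Reals.
From Coquelicot Require Import Coquelicot.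
Open Scope R_scope.

Definition fun3 := R -> R -> R -> R.

Definition d3 (k : nat) (F : fun3) : fun3 :=
  fun t x u =>
    match k with
    | O => Derive (fun s => F s x u) t
    | 1%nat => Derive (fun s => F t s u) x
    | _ => Derive (fun s => F t x s) u
    end.

Definition ex_d3 (k : nat) (F : fun3) (t x u : R) : Prop :=
  match k with
  | O => ex_derive (fun s => F s x u) t
  | 1%nat => ex_derive (fun s => F t s u) x
  | _ => ex_derive (fun s => F t x s) u
  end.

Definition in_box (t0 t1 x0 x1 u0 u1 t x u : R) : Prop :=
  t0 < t < t1 /\ x0 < x < x1 /\ u0 < u < u1.

Definition cont_box (t0 t1 x0 x1 u0 u1 : R) (F : fun3) : Prop :=
  forall t x u, in_box t0 t1 x0 x1 u0 u1 t x u ->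
    continuous (fun p : R * R * R => F (fst (fst p)) (snd (fst p)) (snd p))
               (t, x, u).

Fixpoint Cn_box (t0 t1 x0 x1 u0 u1 : R) (n : nat) (F : fun3) {struct n} : Prop :=
  match n with
  | O => cont_box t0 t1 x0 x1 u0 u1 F
  | S m => cont_box t0 t1 x0 x1 u0 u1 F /\
           forall k : nat, (k < 3)%nat ->
             (forall t x u, in_box t0 t1 x0 x1 u0 u1 t x u -> ex_d3 k F t x u) /\
             Cn_box t0 t1 x0 x1 u0 u1 m (d3 k F)
  end.

Definition smooth_box (t0 t1 x0 x1 u0 u1 : R) (F : fun3) : Prop :=
  forall n, Cn_box t0 t1 x0 x1 u0 u1 n F.

(* Q = vt d/dt + vx d/dx + vu d/du *)
Record vfield := VF { vt : fun3 ; vx : fun3 ; vu : fun3 }.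

Definition comp (Q : vfield) (i : nat) : fun3 :=
  match i with O => vt Q | 1%nat => vx Q | _ => vu Q end.

Definition apply_vf (Q : vfield) (F : fun3) : fun3 :=
  fun t x u => vt Q t x u * d3 0 F t x u + vx Q t x u * d3 1 F t x u
             + vu Q t x u * d3 2 F t x u.

Definition bracket (Q P : vfield) : vfield :=
  VF (fun t x u => apply_vf Q (vt P) t x u - apply_vf P (vt Q) t x u)
     (fun t x u => apply_vf Q (vx P) t x u - apply_vf P (vx Q) t x u)
     (fun t x u => apply_vf Q (vu P) t x u - apply_vf P (vu Q) t x u).

Definition lincomb3 (a b c : R) (Q1 Q2 Q3 : vfield) : vfield :=
  VF (fun t x u => a * vt Q1 t x u + b * vt Q2 t x u + c * vt Q3 t x u)
     (fun t x u => a * vx Q1 t x u + b * vx Q2 t x u + c * vx Q3 t x u)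
     (fun t x u => a * vu Q1 t x u + b * vu Q2 t x u + c * vu Q3 t x u).

Definition scale_vf (a : R) (Q : vfield) : vfield :=
  VF (fun t x u => a * vt Q t x u) (fun t x u => a * vx Q t x u)
     (fun t x u => a * vu Q t x u).

Definition vf_eq_box (t0 t1 x0 x1 u0 u1 : R) (Q P : vfield) : Prop :=
  forall t x u, in_box t0 t1 x0 x1 u0 u1 t x u ->
    vt Q t x u = vt P t x u /\ vx Q t x u = vx P t x u /\ vu Q t x u = vu P t x u.

Definition vf_zero : vfield := VF (fun _ _ _ => 0) (fun _ _ _ => 0) (fun _ _ _ => 0).

Definition lin_indep3 (t0 t1 x0 x1 u0 u1 : R) (Q1 Q2 Q3 : vfield) : Prop :=
  forall a b c : R,
    vf_eq_box t0 t1 x0 x1 u0 u1 (lincomb3 a b c Q1 Q2 Q3) vf_zero ->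
    a = 0 /\ b = 0 /\ c = 0.

Definition special_form (t0 t1 x0 x1 u0 u1 : R) (Q : vfield) : Prop :=
  exists (tau xi h : R -> R) (r : R -> R -> R),
    forall t x u, in_box t0 t1 x0 x1 u0 u1 t x u ->
      vt Q t x u = tau t /\ vx Q t x u = xi x /\ vu Q t x u = h t * u + r t x.

(* A point of the second-order jet space, coordinates:
   0:t 1:x 2:u 3:u_t 4:u_x 5:u_tt 6:u_tx 7:u_xx *)
Definition jet := nat -> R.

Definition upd (p : jet) (k : nat) (s : R) : jet :=
  fun i => if Nat.eqb i k then s else p i.

Definition pd (k : nat) (F : jet -> R) (p : jet) : R :=
  Derive (fun s => F (upd p k s)) (p k).

Definition lift3 (F : fun3) : jet -> R := fun p => F (p 0%nat) (p 1%nat) (p 2%nat).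

(* Total derivatives D_t, D_x of jet functions depending on (t,x,u,u_t,u_x)
   only (for such functions these are the exact total derivatives). *)
Definition Dt (F : jet -> R) (p : jet) : R :=
  pd 0 F p + p 3%nat * pd 2 F p + p 5%nat * pd 3 F p + p 6%nat * pd 4 F p.
Definition Dx (F : jet -> R) (p : jet) : R :=
  pd 1 F p + p 4%nat * pd 2 F p + p 6%nat * pd 3 F p + p 7%nat * pd 4 F p.

Definition eta_t (Q : vfield) (p : jet) : R :=
  Dt (lift3 (vu Q)) p - p 3%nat * Dt (lift3 (vt Q)) p - p 4%nat * Dt (lift3 (vx Q)) p.
Definition eta_x (Q : vfield) (p : jet) : R :=
  Dx (lift3 (vu Q)) p - p 3%nat * Dx (lift3 (vt Q)) p - p 4%nat * Dx (lift3 (vx Q)) p.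
Definition eta_tt (Q : vfield) (p : jet) : R :=
  Dt (eta_t Q) p - p 5%nat * Dt (lift3 (vt Q)) p - p 6%nat * Dt (lift3 (vx Q)) p.
Definition eta_tx (Q : vfield) (p : jet) : R :=
  Dx (eta_t Q) p - p 5%nat * Dx (lift3 (vt Q)) p - p 6%nat * Dx (lift3 (vx Q)) p.
Definition eta_xx (Q : vfield) (p : jet) : R :=
  Dx (eta_x Q) p - p 6%nat * Dx (lift3 (vt Q)) p - p 7%nat * Dx (lift3 (vx Q)) p.

Definition pr2 (Q : vfield) (Delta : jet -> R) (p : jet) : R :=
    lift3 (vt Q) p * pd 0 Delta p + lift3 (vx Q) p * pd 1 Delta p
  + lift3 (vu Q) p * pd 2 Delta p
  + eta_t Q p * pd 3 Delta p + eta_x Q p * pd 4 Delta p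
  + eta_tt Q p * pd 5 Delta p + eta_tx Q p * pd 6 Delta p
  + eta_xx Q p * pd 7 Delta p.

Definition Delta_eq (g : R -> R -> R) (f : fun3) (p : jet) : R :=
  p 6%nat - g (p 0%nat) (p 1%nat) * p 4%nat - f (p 0%nat) (p 1%nat) (p 2%nat).

Definition is_symmetry (t0 t1 x0 x1 u0 u1 : R) (g : R -> R -> R) (f : fun3)
    (Q : vfield) : Prop :=
  forall p : jet, in_box t0 t1 x0 x1 u0 u1 (p 0%nat) (p 1%nat) (p 2%nat) ->
    Delta_eq g f p = 0 -> pr2 Q (Delta_eq g f) p = 0.

Definition so3_relations (t0 t1 x0 x1 u0 u1 : R) (Q1 Q2 Q3 : vfield) : Prop :=
  vf_eq_box t0 t1 x0 x1 u0 u1 (bracket Q1 Q2) Q3 /\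
  vf_eq_box t0 t1 x0 x1 u0 u1 (bracket Q2 Q3) Q1 /\
  vf_eq_box t0 t1 x0 x1 u0 u1 (bracket Q3 Q1) Q2.

Definition sl2_relations (t0 t1 x0 x1 u0 u1 : R) (Q1 Q2 Q3 : vfield) : Prop :=
  vf_eq_box t0 t1 x0 x1 u0 u1 (bracket Q1 Q2) Q1 /\
  vf_eq_box t0 t1 x0 x1 u0 u1 (bracket Q2 Q3) Q3 /\
  vf_eq_box t0 t1 x0 x1 u0 u1 (bracket Q1 Q3) (scale_vf 2 Q2).

(* Main.v *)
Require Import Defs.
From Stdlib Require Import Reals.
From Coquelicot Require Import Coquelicot.
From Stdlib Require Import Lra Psatz Classical.
Open Scope R_scope.

Lemma loc_int a b y : a < y < b -> locally y (fun z => a < z < b).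
Proof. intros [H1 H2].
assert (Hp: 0 < Rmin (y - a) (b - y)) by (apply Rmin_pos; lra).
exists (mkposreal _ Hp). intros z Hz; cbv beta. cbn in Hz. unfold AbsRing_ball, abs, minus, plus, opp in Hz; simpl in Hz.
pose proof (Rmin_l (y-a) (b-y)). pose proof (Rmin_r (y-a) (b-y)).
apply Rabs_def2 in Hz. lra. Qed.

Lemma loc_impl (y : R) (P Q : R -> Prop) : locally y P -> (forall z, P z -> Q z) -> locally y Q.
Proof. intros [e He] H. exists e. intros z Hz; cbv beta. apply H, He, Hz. Qed.

Lemma loc_t t0 t1 x0 x1 u0 u1 t x u : in_box t0 t1 x0 x1 u0 u1 t x u ->
  locally t (fun y => in_box t0 t1 x0 x1 u0 u1 y x u).
Proof. intros (H1&H2&H3). apply (loc_impl _ _ _ (loc_int _ _ _ H1)). intros z Hz; cbv beta. split; auto. Qed.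
Lemma loc_x t0 t1 x0 x1 u0 u1 t x u : in_box t0 t1 x0 x1 u0 u1 t x u ->
  locally x (fun y => in_box t0 t1 x0 x1 u0 u1 t y u).
Proof. intros (H1&H2&H3). apply (loc_impl _ _ _ (loc_int _ _ _ H2)). intros z Hz; cbv beta. split; auto. Qed.
Lemma loc_u t0 t1 x0 x1 u0 u1 t x u : in_box t0 t1 x0 x1 u0 u1 t x u ->
  locally u (fun y => in_box t0 t1 x0 x1 u0 u1 t x y).
Proof. intros (H1&H2&H3). apply (loc_impl _ _ _ (loc_int _ _ _ H3)). intros z Hz; cbv beta. split; auto. Qed.

Lemma sm_d3 t0 t1 x0 x1 u0 u1 F k : smooth_box t0 t1 x0 x1 u0 u1 F -> (k < 3)%nat ->
  smooth_box t0 t1 x0 x1 u0 u1 (d3 k F).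
Proof. intros H Hk n. destruct (H (S n)) as [_ H']. apply (H' k Hk). Qed.

Lemma sm_ex t0 t1 x0 x1 u0 u1 F k t x u : smooth_box t0 t1 x0 x1 u0 u1 F -> (k < 3)%nat ->
  in_box t0 t1 x0 x1 u0 u1 t x u -> ex_d3 k F t x u.
Proof. intros H Hk Hb. destruct (H 1%nat) as [_ H']. apply (H' k Hk); auto. Qed.

Lemma Derive_loc_const (F : R -> R) y c : locally y (fun z => F z = c) -> Derive F y = 0.
Proof. intro H. rewrite (Derive_ext_loc _ (fun _ => c)); auto. apply Derive_const. Qed.

Lemma Qdata t0 t1 x0 x1 u0 u1 (Q : vfield) (tau xi h : R -> R) (r : R -> R -> R) :
  smooth_box t0 t1 x0 x1 u0 u1 (vt Q) ->
  smooth_box t0 t1 x0 x1 u0 u1 (vx Q) ->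
  smooth_box t0 t1 x0 x1 u0 u1 (vu Q) ->
  (forall t x u, in_box t0 t1 x0 x1 u0 u1 t x u ->
      vt Q t x u = tau t /\ vx Q t x u = xi x /\ vu Q t x u = h t * u + r t x) ->
  forall t x u, in_box t0 t1 x0 x1 u0 u1 t x u ->
  (d3 0 (vt Q) t x u = Derive tau t /\ d3 1 (vt Q) t x u = 0 /\ d3 2 (vt Q) t x u = 0 /\
   d3 0 (vx Q) t x u = 0 /\ d3 1 (vx Q) t x u = Derive xi x /\ d3 2 (vx Q) t x u = 0 /\
   d3 2 (vu Q) t x u = h t /\ d3 1 (vu Q) t x u = Derive (r t) x /\
   d3 0 (vu Q) t x u = Derive h t * u + Derive (fun y => r y x) t) /\
  (ex_derive tau t /\ ex_derive xi x /\ ex_derive h t /\ ex_derive (fun y => r y x) t /\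
   ex_derive (r t) x /\ ex_derive (fun s => Derive (fun y => r y s) t) x).
Proof.
intros St Sx Su HF.
assert (Hu2 : forall t x u, in_box t0 t1 x0 x1 u0 u1 t x u -> d3 2 (vu Q) t x u = h t).
{ intros t x u Hb. unfold d3. rewrite (Derive_ext_loc _ (fun s => h t * s + r t x)).
  apply is_derive_unique. auto_derive; auto. ring.
  apply (loc_impl _ _ _ (loc_u _ _ _ _ _ _ _ _ _ Hb)). intros z Hz; cbv beta. apply HF, Hz. }
assert (Hh : forall t x u, in_box t0 t1 x0 x1 u0 u1 t x u -> ex_derive h t).
{ intros t x u Hb. apply (ex_derive_ext_loc (fun s => d3 2 (vu Q) s x u)).
  apply (loc_impl _ _ _ (loc_t _ _ _ _ _ _ _ _ _ Hb)). intros z Hz; cbv beta. apply Hu2, Hz.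
  apply (sm_ex _ _ _ _ _ _ _ 0 t x u (sm_d3 _ _ _ _ _ _ _ 2 Su ltac:(lia)) ltac:(lia) Hb). }
assert (Hrt : forall t x u, in_box t0 t1 x0 x1 u0 u1 t x u -> ex_derive (fun y => r y x) t).
{ intros t x u Hb. apply (ex_derive_ext_loc (fun s => vu Q s x u - h s * u)).
  apply (loc_impl _ _ _ (loc_t _ _ _ _ _ _ _ _ _ Hb)). intros z Hz; cbv beta.
  destruct (HF _ _ _ Hz) as (_&_&->). simpl. ring.
  auto_derive. split. apply (sm_ex _ _ _ _ _ _ _ 0 t x u Su ltac:(lia) Hb).
  split; auto. apply (Hh _ _ _ Hb). }
assert (Hrx : forall t x u, in_box t0 t1 x0 x1 u0 u1 t x u -> ex_derive (r t) x).
{ intros t x u Hb. apply (ex_derive_ext_loc (fun s => vu Q t s u - h t * u)).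
  apply (loc_impl _ _ _ (loc_x _ _ _ _ _ _ _ _ _ Hb)). intros z Hz; cbv beta.
  destruct (HF _ _ _ Hz) as (_&_&->). simpl; ring.
  auto_derive. apply (sm_ex _ _ _ _ _ _ _ 1 t x u Su ltac:(lia) Hb). }
assert (Hu0 : forall t x u, in_box t0 t1 x0 x1 u0 u1 t x u ->
   d3 0 (vu Q) t x u = Derive h t * u + Derive (fun y => r y x) t).
{ intros t x u Hb. unfold d3. rewrite (Derive_ext_loc _ (fun s => h s * u + r s x)).
  apply is_derive_unique. auto_derive. split. apply (Hh _ _ _ Hb). split; auto. apply (Hrt _ _ _ Hb).
  change (fun x0 => h x0) with h. ring.
  apply (loc_impl _ _ _ (loc_t _ _ _ _ _ _ _ _ _ Hb)). intros z Hz; cbv beta. apply HF, Hz. }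
intros t x u Hb. split.
- repeat split.
  + unfold d3. apply Derive_ext_loc. apply (loc_impl _ _ _ (loc_t _ _ _ _ _ _ _ _ _ Hb)). intros z Hz; cbv beta. apply HF, Hz.
  + unfold d3. apply (Derive_loc_const _ _ (tau t)). apply (loc_impl _ _ _ (loc_x _ _ _ _ _ _ _ _ _ Hb)). intros z Hz; cbv beta. apply HF, Hz.
  + unfold d3. apply (Derive_loc_const _ _ (tau t)). apply (loc_impl _ _ _ (loc_u _ _ _ _ _ _ _ _ _ Hb)). intros z Hz; cbv beta. apply HF, Hz.
  + unfold d3. apply (Derive_loc_const _ _ (xi x)). apply (loc_impl _ _ _ (loc_t _ _ _ _ _ _ _ _ _ Hb)). intros z Hz; cbv beta. apply HF, Hz.
  + unfold d3. apply Derive_ext_loc. apply (loc_impl _ _ _ (loc_x _ _ _ _ _ _ _ _ _ Hb)). intros z Hz; cbv beta. apply HF, Hz.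
  + unfold d3. apply (Derive_loc_const _ _ (xi x)). apply (loc_impl _ _ _ (loc_u _ _ _ _ _ _ _ _ _ Hb)). intros z Hz; cbv beta. apply HF, Hz.
  + apply Hu2, Hb.
  + unfold d3. rewrite (Derive_ext_loc _ (fun s => h t * u + r t s)).
    apply is_derive_unique. auto_derive. apply (Hrx _ _ _ Hb). change (fun x0 => r t x0) with (r t). ring.
    apply (loc_impl _ _ _ (loc_x _ _ _ _ _ _ _ _ _ Hb)). intros z Hz; cbv beta. apply HF, Hz.
  + apply Hu0, Hb.
- repeat split.
  + apply (ex_derive_ext_loc (fun s => vt Q s x u)).
    apply (loc_impl _ _ _ (loc_t _ _ _ _ _ _ _ _ _ Hb)). intros z Hz; cbv beta. apply HF, Hz.
    apply (sm_ex _ _ _ _ _ _ _ 0 t x u St ltac:(lia) Hb).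
  + apply (ex_derive_ext_loc (fun s => vx Q t s u)).
    apply (loc_impl _ _ _ (loc_x _ _ _ _ _ _ _ _ _ Hb)). intros z Hz; cbv beta. apply HF, Hz.
    apply (sm_ex _ _ _ _ _ _ _ 1 t x u Sx ltac:(lia) Hb).
  + apply (Hh _ _ _ Hb).
  + apply (Hrt _ _ _ Hb).
  + apply (Hrx _ _ _ Hb).
  + apply (ex_derive_ext_loc (fun s => d3 0 (vu Q) t s u - Derive h t * u)).
    apply (loc_impl _ _ _ (loc_x _ _ _ _ _ _ _ _ _ Hb)). intros z Hz; cbv beta. rewrite (Hu0 _ _ _ Hz). simpl; ring.
    auto_derive. apply (sm_ex _ _ _ _ _ _ _ 1 t x u (sm_d3 _ _ _ _ _ _ _ 0 Su ltac:(lia)) ltac:(lia) Hb).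
Qed.

Lemma Derive_cplus (c : R) (F : R -> R) y : ex_derive F y -> Derive (fun s => c + F s) y = Derive F y.
Proof. intro H. apply is_derive_unique.
  assert (H2 := is_derive_plus (fun _ => c) F y 0 (Derive F y) (is_derive_const c y) (Derive_correct _ _ H)).
  simpl in H2. unfold plus in H2; simpl in H2. rewrite Rplus_0_l in H2. exact H2. Qed.

Definition mkjet (t x u w : R) (g : R -> R -> R) (f : fun3) : jet :=
  fun i => match i with O => t | 1%nat => x | 2%nat => u | 4%nat => w
   | 6%nat => g t x * w + f t x u | _ => 0%R end.

Definition ET (Q : vfield) (a b c d e : R) : R :=
  d3 0 (vu Q) a b c + d * d3 2 (vu Q) a b c - d * (d3 0 (vt Q) a b c + d * d3 2 (vt Q) a b c)
  - e * (d3 0 (vx Q) a b c + d * d3 2 (vx Q) a b c).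

Lemma eta_t_eq Q q : eta_t Q q = ET Q (q 0%nat) (q 1%nat) (q 2%nat) (q 3%nat) (q 4%nat).
Proof. unfold eta_t, Defs.Dt, pd, lift3, upd, ET. cbn -[Derive]. rewrite !Derive_const. unfold d3. ring. Qed.

Lemma Dx_lift F q : Defs.Dx (lift3 F) q = d3 1 F (q 0%nat) (q 1%nat) (q 2%nat) + q 4%nat * d3 2 F (q 0%nat) (q 1%nat) (q 2%nat).
Proof. unfold Defs.Dx, pd, lift3, upd. cbn -[Derive]. rewrite !Derive_const. unfold d3. ring. Qed.

Lemma pd_eta_t k Q p : pd k (eta_t Q) p = Derive (fun s => ET Q (upd p k s 0%nat) (upd p k s 1%nat) (upd p k s 2%nat) (upd p k s 3%nat) (upd p k s 4%nat)) (p k).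
Proof. unfold pd. apply Derive_ext. intro s. apply eta_t_eq. Qed.

Lemma Qsym t0 t1 x0 x1 u0 u1 (g : R -> R -> R) (f : fun3) (Q : vfield) (tau xi h : R -> R) (r : R -> R -> R) :
  smooth_box t0 t1 x0 x1 u0 u1 (fun t x _ => g t x) ->
  smooth_box t0 t1 x0 x1 u0 u1 f ->
  smooth_box t0 t1 x0 x1 u0 u1 (vt Q) ->
  smooth_box t0 t1 x0 x1 u0 u1 (vx Q) ->
  smooth_box t0 t1 x0 x1 u0 u1 (vu Q) ->
  (forall t x u, in_box t0 t1 x0 x1 u0 u1 t x u ->
      vt Q t x u = tau t /\ vx Q t x u = xi x /\ vu Q t x u = h t * u + r t x) ->
  is_symmetry t0 t1 x0 x1 u0 u1 g f Q ->
  forall t x u, in_box t0 t1 x0 x1 u0 u1 t x u ->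
   Derive h t = Derive tau t * g t x + tau t * Derive (fun s => g s x) t + xi x * Derive (fun s => g t s) x
   /\
   Derive (fun s => Derive (fun y => r y s) t) x - g t x * Derive (r t) x
   + (h t - Derive tau t - Derive xi x) * f t x u - (h t * u + r t x) * Derive (fun v => f t x v) u
   - tau t * Derive (fun s => f s x u) t - xi x * Derive (fun s => f t s u) x = 0.
Proof.
intros Sg Sf St Sx Su HF Hsym t x u Hb.
destruct (Qdata _ _ _ _ _ _ Q tau xi h r St Sx Su HF t x u Hb) as
  ((D0t&D1t&D2t&D0x&D1x&D2x&D2u&D1u&D0u)&(Etau&Exi&Eh&Ert&Erx&Ertx)).
assert (Egt : ex_derive (fun s => g s x) t) by apply (sm_ex _ _ _ _ _ _ _ 0 t x u Sg ltac:(lia) Hb).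
assert (Egx : ex_derive (fun s => g t s) x) by apply (sm_ex _ _ _ _ _ _ _ 1 t x u Sg ltac:(lia) Hb).
assert (Eft : ex_derive (fun s => f s x u) t) by apply (sm_ex _ _ _ _ _ _ _ 0 t x u Sf ltac:(lia) Hb).
assert (Efx : ex_derive (fun s => f t s u) x) by apply (sm_ex _ _ _ _ _ _ _ 1 t x u Sf ltac:(lia) Hb).
assert (Efu : ex_derive (fun s => f t x s) u) by apply (sm_ex _ _ _ _ _ _ _ 2 t x u Sf ltac:(lia) Hb).
assert (KEY : forall w, w * (Derive h t - (Derive tau t * g t x + tau t * Derive (fun s => g s x) t + xi x * Derive (fun s => g t s) x))
   + (Derive (fun s => Derive (fun y => r y s) t) x - g t x * Derive (r t) x
   + (h t - Derive tau t - Derive xi x) * f t x u - (h t * u + r t x) * Derive (fun v => f t x v) u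
   - tau t * Derive (fun s => f s x u) t - xi x * Derive (fun s => f t s u) x) = 0).
{ intro w. set (p := mkjet t x u w g f).
  assert (Hp : pr2 Q (Delta_eq g f) p = 0).
  { apply Hsym. exact Hb. unfold Delta_eq, p, mkjet. simpl. ring. }
  rewrite <- Hp. unfold pr2.
  assert (P0 : pd 0 (Delta_eq g f) p = - (Derive (fun s => g s x) t * w + Derive (fun s => f s x u) t)).
  { unfold pd, Delta_eq, upd, p, mkjet. cbn -[Derive]. apply is_derive_unique. auto_derive.
    repeat split; auto. change (fun x0 => g x0 x) with (fun s => g s x). change (fun x0 => f x0 x u) with (fun s => f s x u). ring. }
  assert (P1 : pd 1 (Delta_eq g f) p = - (Derive (fun s => g t s) x * w + Derive (fun s => f t s u) x)).
  { unfold pd, Delta_eq, upd, p, mkjet. cbn -[Derive]. apply is_derive_unique. auto_derive.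
    repeat split; auto. change (fun x0 => g t x0) with (fun s => g t s). change (fun x0 => f t x0 u) with (fun s => f t s u). ring. }
  assert (P2 : pd 2 (Delta_eq g f) p = - Derive (fun s => f t x s) u).
  { unfold pd, Delta_eq, upd, p, mkjet. cbn -[Derive]. apply is_derive_unique. auto_derive.
    repeat split; auto. change (fun x0 => f t x x0) with (fun s => f t x s). ring. }
  assert (P3 : pd 3 (Delta_eq g f) p = 0).
  { unfold pd, Delta_eq, upd, p, mkjet. cbn -[Derive]. apply Derive_const. }
  assert (P4 : pd 4 (Delta_eq g f) p = - g t x).
  { unfold pd, Delta_eq, upd, p, mkjet. cbn -[Derive]. apply is_derive_unique. auto_derive; auto; try ring. }
  assert (P5 : pd 5 (Delta_eq g f) p = 0).
  { unfold pd, Delta_eq, upd, p, mkjet. cbn -[Derive]. apply Derive_const. }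
  assert (P6 : pd 6 (Delta_eq g f) p = 1).
  { unfold pd, Delta_eq, upd, p, mkjet. cbn -[Derive]. apply is_derive_unique. auto_derive; auto; try ring. }
  assert (P7 : pd 7 (Delta_eq g f) p = 0).
  { unfold pd, Delta_eq, upd, p, mkjet. cbn -[Derive]. apply Derive_const. }
  rewrite P0, P1, P2, P3, P4, P5, P6, P7.
  assert (EX : eta_x Q p = Derive (r t) x + w * h t - w * (Derive xi x + w * 0)).
  { unfold eta_x. rewrite !Dx_lift. unfold p, mkjet. cbn -[d3 Derive]. rewrite D1u, D2u, D1x, D2x. ring. }
  assert (Q1 : pd 1 (eta_t Q) p = Derive (fun s => Derive (fun y => r y s) t) x).
  { rewrite pd_eta_t. unfold upd, p, mkjet. cbn -[Derive ET].
    rewrite (Derive_ext_loc _ (fun s => Derive h t * u + Derive (fun y => r y s) t)).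
    apply Derive_cplus. exact Ertx.
    apply (loc_impl _ _ _ (loc_x _ _ _ _ _ _ _ _ _ Hb)). intros z Hz; cbv beta.
    destruct (Qdata _ _ _ _ _ _ Q tau xi h r St Sx Su HF t z u Hz) as
      ((_&_&_&D0x'&_&D2x'&_&_&D0u')&_).
    unfold ET. rewrite D0x', D2x', D0u'. simpl; ring. }
  assert (Q2 : pd 2 (eta_t Q) p = Derive h t).
  { rewrite pd_eta_t. unfold upd, p, mkjet. cbn -[Derive ET].
    rewrite (Derive_ext_loc _ (fun s => Derive h t * s + Derive (fun y => r y x) t)).
    apply is_derive_unique. auto_derive. auto. ring.
    apply (loc_impl _ _ _ (loc_u _ _ _ _ _ _ _ _ _ Hb)). intros z Hz; cbv beta.
    destruct (Qdata _ _ _ _ _ _ Q tau xi h r St Sx Su HF t x z Hz) as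
      ((_&_&_&D0x'&_&D2x'&_&_&D0u')&_).
    unfold ET. rewrite D0x', D2x', D0u'. simpl; ring. }
  assert (Q3 : pd 3 (eta_t Q) p = h t - Derive tau t).
  { rewrite pd_eta_t. unfold upd, p, mkjet. cbn -[Derive ET].
    unfold ET. rewrite D0x, D2x, D0u, D2u, D0t, D2t.
    apply is_derive_unique. auto_derive. auto. ring. }
  assert (ETX : eta_tx Q p = Derive (fun s => Derive (fun y => r y s) t) x + w * Derive h t
       + (g t x * w + f t x u) * (h t - Derive tau t) - (g t x * w + f t x u) * Derive xi x).
  { unfold eta_tx. rewrite !Dx_lift. unfold Defs.Dx at 1. rewrite Q1, Q2, Q3.
    unfold p, mkjet. cbn -[d3 Derive pd eta_t]. rewrite D1x, D2x. ring. }
  rewrite EX, ETX. unfold lift3, p, mkjet; simpl.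
  destruct (HF _ _ _ Hb) as (->&->&->). ring. }
split.
- pose proof (KEY 1) as K1. pose proof (KEY 0) as K0. lra.
- specialize (KEY 0). lra.
Qed.

Lemma lin_deriv (a b c d e0 e1 : R) (F0 F1 F2 F3 : R -> R) y :
  ex_derive F0 y -> ex_derive F1 y -> ex_derive F2 y -> ex_derive F3 y ->
  is_derive (fun s => a + b * F0 s - (c * s + d) * F1 s - e0 * F2 s - e1 * F3 s) y
    (b * Derive F0 y - (c * F1 y + (c * y + d) * Derive F1 y) - e0 * Derive F2 y - e1 * Derive F3 y).
Proof. intros. auto_derive. repeat split; auto.
change (fun x => F0 x) with F0. change (fun x => F1 x) with F1. change (fun x => F2 x) with F2.
change (fun x => F3 x) with F3. ring. Qed.

Lemma Qeu t0 t1 x0 x1 u0 u1 (g : R -> R -> R) (f : fun3) (Q : vfield) (tau xi h : R -> R) (r : R -> R -> R) :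
  smooth_box t0 t1 x0 x1 u0 u1 (fun t x _ => g t x) ->
  smooth_box t0 t1 x0 x1 u0 u1 f ->
  smooth_box t0 t1 x0 x1 u0 u1 (vt Q) ->
  smooth_box t0 t1 x0 x1 u0 u1 (vx Q) ->
  smooth_box t0 t1 x0 x1 u0 u1 (vu Q) ->
  (forall t x u, in_box t0 t1 x0 x1 u0 u1 t x u ->
      vt Q t x u = tau t /\ vx Q t x u = xi x /\ vu Q t x u = h t * u + r t x) ->
  is_symmetry t0 t1 x0 x1 u0 u1 g f Q ->
  forall t x u, in_box t0 t1 x0 x1 u0 u1 t x u ->
   - (Derive tau t + Derive xi x) * Derive (fun v => f t x v) u
   - (h t * u + r t x) * Derive (fun s => Derive (fun v => f t x v) s) u
   - tau t * Derive (fun s => Derive (fun y => f y x s) t) u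
   - xi x * Derive (fun s => Derive (fun y => f t y s) x) u = 0.
Proof.
intros Sg Sf St Sx Su HF Hsym t x u Hb.
set (a := Derive (fun s => Derive (fun y => r y s) t) x - g t x * Derive (r t) x).
assert (E0 : ex_derive (fun s => f t x s) u) by apply (sm_ex _ _ _ _ _ _ _ 2 t x u Sf ltac:(lia) Hb).
assert (E1 : ex_derive (fun s => Derive (fun v => f t x v) s) u) by
  apply (sm_ex _ _ _ _ _ _ _ 2 t x u (sm_d3 _ _ _ _ _ _ _ 2 Sf ltac:(lia)) ltac:(lia) Hb).
assert (E2 : ex_derive (fun s => Derive (fun y => f y x s) t) u) by
  apply (sm_ex _ _ _ _ _ _ _ 2 t x u (sm_d3 _ _ _ _ _ _ _ 0 Sf ltac:(lia)) ltac:(lia) Hb).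
assert (E3 : ex_derive (fun s => Derive (fun y => f t y s) x) u) by
  apply (sm_ex _ _ _ _ _ _ _ 2 t x u (sm_d3 _ _ _ _ _ _ _ 1 Sf ltac:(lia)) ltac:(lia) Hb).
pose proof (lin_deriv a (h t - Derive tau t - Derive xi x) (h t) (r t x) (tau t) (xi x) _ _ _ _ u E0 E1 E2 E3) as HD.
apply is_derive_unique in HD.
rewrite (Derive_loc_const _ _ 0) in HD.
- cbv beta in HD. cbn in HD. lra.
- apply (loc_impl _ _ _ (loc_u _ _ _ _ _ _ _ _ _ Hb)). intros z Hz; cbv beta.
  destruct (Qsym _ _ _ _ _ _ g f Q tau xi h r Sg Sf St Sx Su HF Hsym t x z Hz) as [_ HB].
  unfold a. rewrite <- HB. ring.
Qed.



Lemma Qbr t0 t1 x0 x1 u0 u1 (Qi Qj : vfield) (ti xi hi : R -> R) (ri : R -> R -> R)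
  (tj xj hj : R -> R) (rj : R -> R -> R) :
  smooth_box t0 t1 x0 x1 u0 u1 (vt Qi) -> smooth_box t0 t1 x0 x1 u0 u1 (vx Qi) ->
  smooth_box t0 t1 x0 x1 u0 u1 (vu Qi) ->
  (forall t x u, in_box t0 t1 x0 x1 u0 u1 t x u ->
      vt Qi t x u = ti t /\ vx Qi t x u = xi x /\ vu Qi t x u = hi t * u + ri t x) ->
  smooth_box t0 t1 x0 x1 u0 u1 (vt Qj) -> smooth_box t0 t1 x0 x1 u0 u1 (vx Qj) ->
  smooth_box t0 t1 x0 x1 u0 u1 (vu Qj) ->
  (forall t x u, in_box t0 t1 x0 x1 u0 u1 t x u ->
      vt Qj t x u = tj t /\ vx Qj t x u = xj x /\ vu Qj t x u = hj t * u + rj t x) ->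
  forall t x u, in_box t0 t1 x0 x1 u0 u1 t x u ->
  vt (bracket Qi Qj) t x u = ti t * Derive tj t - tj t * Derive ti t /\
  vx (bracket Qi Qj) t x u = xi x * Derive xj x - xj x * Derive xi x /\
  vu (bracket Qi Qj) t x u =
    ti t * (Derive hj t * u + Derive (fun y => rj y x) t) + xi x * Derive (rj t) x + (hi t * u + ri t x) * hj t
    - (tj t * (Derive hi t * u + Derive (fun y => ri y x) t) + xj x * Derive (ri t) x + (hj t * u + rj t x) * hi t).
Proof.
intros Sti Sxi Sui HFi Stj Sxj Suj HFj t x u Hb.
destruct (Qdata _ _ _ _ _ _ Qi ti xi hi ri Sti Sxi Sui HFi t x u Hb) as
  ((D0t&D1t&D2t&D0x&D1x&D2x&D2u&D1u&D0u)&_).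
destruct (Qdata _ _ _ _ _ _ Qj tj xj hj rj Stj Sxj Suj HFj t x u Hb) as
  ((D0t'&D1t'&D2t'&D0x'&D1x'&D2x'&D2u'&D1u'&D0u')&_).
destruct (HFi _ _ _ Hb) as (Vt&Vx&Vu). destruct (HFj _ _ _ Hb) as (Vt'&Vx'&Vu').
unfold bracket, apply_vf; cbn -[d3 Derive].
rewrite D0t, D1t, D2t, D0x, D1x, D2x, D2u, D1u, D0u, D0t', D1t', D2t', D0x', D1x', D2x', D2u', D1u', D0u', Vt, Vx, Vu, Vt', Vx', Vu'.
repeat split; ring.
Qed.

Lemma derivX (a b p q : R -> R) (c T T1 T2 y : R) :
  locally y (fun s => c = a s * T + b s * (T1 * p s - T2 * q s)) ->
  ex_derive a y -> ex_derive b y -> ex_derive p y -> ex_derive q y ->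
  0 = Derive a y * T + Derive b y * (T1 * p y - T2 * q y) + b y * (T1 * Derive p y - T2 * Derive q y).
Proof. intros HL Ea Eb Ep Eq.
assert (H1 : Derive (fun s => a s * T + b s * (T1 * p s - T2 * q s)) y = 0).
{ apply (Derive_loc_const _ _ c). apply (loc_impl _ _ _ HL). intros z Hz; cbv beta. auto. }
rewrite <- H1. apply is_derive_unique. auto_derive. repeat split; auto.
change (fun x => a x) with a. change (fun x => b x) with b. change (fun x => p x) with p. change (fun x => q x) with q. ring. Qed.

Lemma derivT (hh a b T T1 T2 : R -> R) (X1 X2 y : R) :
  locally y (fun s => hh s = a s * T s + b s * (T1 s * X2 - T2 s * X1)) ->
  ex_derive a y -> ex_derive b y -> ex_derive T y -> ex_derive T1 y -> ex_derive T2 y ->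
  Derive hh y = Derive a y * T y + a y * Derive T y + Derive b y * (T1 y * X2 - T2 y * X1)
     + b y * (Derive T1 y * X2 - Derive T2 y * X1).
Proof. intros HL Ea Eb ET E1 E2.
rewrite (Derive_ext_loc _ (fun s => a s * T s + b s * (T1 s * X2 - T2 s * X1))); auto.
apply is_derive_unique. auto_derive. repeat split; auto.
change (fun x => a x) with a. change (fun x => b x) with b. change (fun x => T x) with T.
change (fun x => T1 x) with T1. change (fun x => T2 x) with T2. ring. Qed.

Lemma derivB (T1 T2 : R -> R) (X1 X2 y : R) :
  locally y (fun s => T1 s * X2 - T2 s * X1 = 0) -> ex_derive T1 y -> ex_derive T2 y ->
  Derive T1 y * X2 - Derive T2 y * X1 = 0.
Proof. intros HL E1 E2.
assert (H1 : Derive (fun s => T1 s * X2 - T2 s * X1) y = 0) by (apply (Derive_loc_const _ _ 0); auto).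
rewrite <- H1. symmetry. apply is_derive_unique. auto_derive. repeat split; auto.
change (fun x => T1 x) with T1. change (fun x => T2 x) with T2. ring. Qed.

Ltac mulall H l := match l with
 | nil => idtac
 | cons ?c ?l' => pose proof (f_equal (Rmult c) H); mulall H l' end.

Lemma par_prod (a1 a2 a3 b1 b2 b3 v1 v2 v3 : R) :
 a1*v2 - a2*v1 = 0 -> a2*v3 - a3*v2 = 0 -> a1*v3 - a3*v1 = 0 ->
 b1*v2 - b2*v1 = 0 -> b2*v3 - b3*v2 = 0 -> b1*v3 - b3*v1 = 0 ->
 forall k, k = v1 \/ k = v2 \/ k = v3 ->
 k * (a1*b2 - a2*b1) = 0 /\ k * (a2*b3 - a3*b2) = 0 /\ k * (a1*b3 - a3*b1) = 0.
Proof. intros H1 H2 H3 H4 H5 H6.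
mulall H1 (b1::b2::b3::nil)%list. mulall H2 (b1::b2::b3::nil)%list. mulall H3 (b1::b2::b3::nil)%list.
mulall H4 (a1::a2::a3::nil)%list. mulall H5 (a1::a2::a3::nil)%list. mulall H6 (a1::a2::a3::nil)%list.
intros k [->|[->| ->]]; repeat split; lra. Qed.

Lemma sq0 (a : R) : a * a = 0 -> a = 0.
Proof. intro H. destruct (Rmult_integral _ _ H); auto. Qed.

Lemma par_zero (a1 a2 a3 b1 b2 b3 v1 v2 v3 : R) :
 a1*v2 - a2*v1 = 0 -> a2*v3 - a3*v2 = 0 -> a1*v3 - a3*v1 = 0 ->
 b1*v2 - b2*v1 = 0 -> b2*v3 - b3*v2 = 0 -> b1*v3 - b3*v1 = 0 ->
 ~ (a1*b2 - a2*b1 = 0 /\ a2*b3 - a3*b2 = 0 /\ a1*b3 - a3*b1 = 0) ->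
 v1 = 0 /\ v2 = 0 /\ v3 = 0.
Proof. intros H1 H2 H3 H4 H5 H6 HN.
assert (K : forall k, k = v1 \/ k = v2 \/ k = v3 -> k = 0).
{ intros k Hk. destruct (par_prod _ _ _ _ _ _ _ _ _ H1 H2 H3 H4 H5 H6 k Hk) as (P1&P2&P3).
  apply Rmult_integral in P1, P2, P3.
  destruct P1 as [P1|P1]; auto. destruct P2 as [P2|P2]; auto. destruct P3 as [P3|P3]; auto.
  exfalso; apply HN; auto. }
split; [|split]; apply K; auto. Qed.

Lemma par_two (a1 a2 a3 b1 b2 b3 v1 v2 v3 : R) :
 a1*v2 - a2*v1 = 0 -> a2*v3 - a3*v2 = 0 -> a1*v3 - a3*v1 = 0 ->
 b1*v2 - b2*v1 = 0 -> b2*v3 - b3*v2 = 0 -> b1*v3 - b3*v1 = 0 ->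
 ~ (v1 = 0 /\ v2 = 0 /\ v3 = 0) ->
 a1*b2 - a2*b1 = 0 /\ a2*b3 - a3*b2 = 0 /\ a1*b3 - a3*b1 = 0.
Proof. intros H1 H2 H3 H4 H5 H6 HN.
pose proof (par_prod _ _ _ _ _ _ _ _ _ H1 H2 H3 H4 H5 H6) as K.
destruct (Req_dec v1 0) as [E1|E1].
destruct (Req_dec v2 0) as [E2|E2].
destruct (Req_dec v3 0) as [E3|E3].
- exfalso; auto.
- destruct (K v3 ltac:(auto)) as (P1&P2&P3). apply Rmult_integral in P1, P2, P3. intuition.
- destruct (K v2 ltac:(auto)) as (P1&P2&P3). apply Rmult_integral in P1, P2, P3. intuition.
- destruct (K v1 ltac:(auto)) as (P1&P2&P3). apply Rmult_integral in P1, P2, P3. intuition.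
Qed.

Lemma cone_of (t1 t2 t3 a1 a2 a3 : R) :
  t1*a2 - t2*a1 = t1 -> t2*a3 - t3*a2 = t3 -> t1*a3 - t3*a1 = 2*t2 -> t2*t2 = t1*t3.
Proof. intros H1 H2 H3. pose proof (f_equal (Rmult t3) H1). pose proof (f_equal (Rmult t1) H2).
pose proof (f_equal (Rmult t2) H3). lra. Qed.

Lemma C_zero (t1 t2 t3 a1 a2 a3 : R) :
  t1*a2 - t2*a1 = t1 -> t2*a3 - t3*a2 = t3 -> t1*a3 - t3*a1 = 2*t2 ->
  t1*a2 - t2*a1 = 0 -> t2*a3 - t3*a2 = 0 -> t1*a3 - t3*a1 = 0 -> t1 = 0 /\ t2 = 0 /\ t3 = 0.
Proof. intros. lra. Qed.

Lemma cone_span (t1 t2 t3 x1 x2 x3 c d G : R) :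
  t2*t2 = t1*t3 -> x2*x2 = x1*x3 -> G <> 0 ->
  G*(t1*x2 - t2*x1) = c*t1 + d*x1 -> G*(t2*x3 - t3*x2) = c*t3 + d*x3 ->
  G*(t1*x3 - t3*x1) = 2*(c*t2 + d*x2) ->
  t1*x2 - t2*x1 = 0 /\ t2*x3 - t3*x2 = 0 /\ t1*x3 - t3*x1 = 0.
Proof. intros Ct Cx HG H1 H2 H3.
assert (Hid : (c*t1 + d*x1)*(t2*x3 - t3*x2) - (c*t2+d*x2)*(t1*x3 - t3*x1) + (c*t3+d*x3)*(t1*x2 - t2*x1) = 0) by ring.
assert (H3' : c*t2+d*x2 = G*(t1*x3 - t3*x1)/2) by lra.
rewrite <- H1, <- H2, H3' in Hid.
assert (H4 : G * (4*(t1*x2 - t2*x1)*(t2*x3 - t3*x2) - (t1*x3 - t3*x1)*(t1*x3 - t3*x1)) = 0) by lra.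
apply Rmult_integral in H4. destruct H4 as [H4|H4]; [contradiction|].
assert (HP : (t1*x3 + t3*x1 - 2*t2*x2)*(t1*x3 + t3*x1 - 2*t2*x2) = 0).
{ replace ((t1*x3 + t3*x1 - 2*t2*x2)*(t1*x3 + t3*x1 - 2*t2*x2)) with
   ((t1*x3 - t3*x1)*(t1*x3 - t3*x1) - 4*(t1*x2 - t2*x1)*(t2*x3 - t3*x2) - 4*(t1*t3 - t2*t2)*(x2*x2 - x1*x3)) by ring.
  rewrite Ct, Cx. lra. }
apply sq0 in HP.
assert (B1 : t1*x2 - t2*x1 = 0).
{ apply sq0. replace ((t1*x2 - t2*x1)*(t1*x2 - t2*x1)) with
   (t1*x1*(t1*x3 + t3*x1 - 2*t2*x2) + t1*t1*(x2*x2 - x1*x3) + x1*x1*(t2*t2 - t1*t3)) by ring.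
  rewrite HP, Ct, Cx. ring. }
assert (B2 : t2*x3 - t3*x2 = 0).
{ apply sq0. replace ((t2*x3 - t3*x2)*(t2*x3 - t3*x2)) with
   (t3*x3*(t1*x3 + t3*x1 - 2*t2*x2) + x3*x3*(t2*t2 - t1*t3) + t3*t3*(x2*x2 - x1*x3)) by ring.
  rewrite HP, Ct, Cx. ring. }
split; auto. split; auto. apply sq0. rewrite B1, B2 in H4. lra. Qed.

Lemma so3alg a1 a2 a3 b1 b2 b3 : a2*b3 - a3*b2 = a1 -> a3*b1 - a1*b3 = a2 -> a1*b2 - a2*b1 = a3 -> a1 = 0 /\ a2 = 0 /\ a3 = 0.
Proof. intros H1 H2 H3. pose proof (f_equal (Rmult a1) H1). pose proof (f_equal (Rmult a2) H2). pose proof (f_equal (Rmult a3) H3).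
assert (a1*a1+a2*a2+a3*a3 = 0) by lra. nra. Qed.

Lemma span_of (t x h r A B A' B' u u' FG FG' e e' s s' : R) :
  FG <> 0 -> FG' <> 0 -> u <> u' ->
  (h*u + r)*FG = t*e + x*s -> (h*u' + r)*FG' = t*e' + x*s' ->
  h = t * ((e/FG - e'/FG')/(u-u')) + x * ((s/FG - s'/FG')/(u-u')).
Proof. intros H1 H2 H3 E1 E2.
assert (E1' : h*u + r = (t*e + x*s)/FG) by (rewrite <- E1; field; auto).
assert (E2' : h*u' + r = (t*e' + x*s')/FG') by (rewrite <- E2; field; auto).
assert (h = ((h*u+r) - (h*u'+r))/(u-u')) by (field; intro; apply H3; lra).
rewrite H, E1', E2'. field. repeat split; auto. intro; apply H3; lra. Qed.

Lemma ALG_S1 (t1 t2 t3 a1 a2 a3 x1 x2 x3 b1 b2 b3 h1 h2 h3 r1 r2 r3 g G Gt Gx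
   E F P R E' F' P' R' u u' : R) :
 t1*a2 - t2*a1 = t1 -> t2*a3 - t3*a2 = t3 -> t1*a3 - t3*a1 = 2*t2 ->
 x1*b2 - x2*b1 = x1 -> x2*b3 - x3*b2 = x3 -> x1*b3 - x3*b1 = 2*x2 ->
 h1 = g*t1 + G*(t1*x2 - t2*x1) -> h3 = g*t3 + G*(t2*x3 - t3*x2) -> 2*h2 = 2*g*t2 + G*(t1*x3 - t3*x1) ->
 0 = G*t1 + Gx*(t1*x2 - t2*x1) + G*(t1*b2 - t2*b1) ->
 0 = G*t3 + Gx*(t2*x3 - t3*x2) + G*(t2*b3 - t3*b2) ->
 0 = 2*G*t2 + Gx*(t1*x3 - t3*x1) + G*(t1*b3 - t3*b1) ->
 G*x1 = Gt*(t1*x2 - t2*x1) + G*(a1*x2 - a2*x1) ->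
 G*x3 = Gt*(t2*x3 - t3*x2) + G*(a2*x3 - a3*x2) ->
 2*G*x2 = Gt*(t1*x3 - t3*x1) + G*(a1*x3 - a3*x1) ->
 -(a1+b1)*E - (h1*u+r1)*F - t1*P - x1*R = 0 ->
 -(a2+b2)*E - (h2*u+r2)*F - t2*P - x2*R = 0 ->
 -(a3+b3)*E - (h3*u+r3)*F - t3*P - x3*R = 0 ->
 -(a1+b1)*E' - (h1*u'+r1)*F' - t1*P' - x1*R' = 0 ->
 -(a2+b2)*E' - (h2*u'+r2)*F' - t2*P' - x2*R' = 0 ->
 -(a3+b3)*E' - (h3*u'+r3)*F' - t3*P' - x3*R' = 0 ->
 G <> 0 -> F <> 0 -> F' <> 0 -> u <> u' ->
 t1*x2 - t2*x1 = 0 /\ t2*x3 - t3*x2 = 0 /\ t1*x3 - t3*x1 = 0.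
Proof.
intros F11 F12 F13 F21 F22 F23 HG1 HG2 HG3 F51 F52 F53 F61 F62 F63 E1 E2 E3 E1' E2' E3' HG HF HF' Hu.
destruct (classic (t1*x2 - t2*x1 = 0 /\ t2*x3 - t3*x2 = 0 /\ t1*x3 - t3*x1 = 0)) as [OK|NB]; auto.
exfalso.
pose proof (f_equal (Rmult G) F11). pose proof (f_equal (Rmult G) F12). pose proof (f_equal (Rmult G) F13).
pose proof (f_equal (Rmult G) F21). pose proof (f_equal (Rmult G) F22). pose proof (f_equal (Rmult G) F23).
destruct (par_zero t1 t2 t3 x1 x2 x3 (Gt*t1 + Gx*x1 + G*(a1+b1)) (Gt*t2 + Gx*x2 + G*(a2+b2)) (Gt*t3 + Gx*x3 + G*(a3+b3)))
  as (V1&V2&V3); try lra; auto.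
assert (C1 : (h1*u + r1)*(F*G) = t1*(Gt*E - P*G) + x1*(Gx*E - R*G)).
{ pose proof (f_equal (Rmult G) E1). pose proof (f_equal (Rmult E) V1). lra. }
assert (C2 : (h2*u + r2)*(F*G) = t2*(Gt*E - P*G) + x2*(Gx*E - R*G)).
{ pose proof (f_equal (Rmult G) E2). pose proof (f_equal (Rmult E) V2). lra. }
assert (C3 : (h3*u + r3)*(F*G) = t3*(Gt*E - P*G) + x3*(Gx*E - R*G)).
{ pose proof (f_equal (Rmult G) E3). pose proof (f_equal (Rmult E) V3). lra. }
assert (C1' : (h1*u' + r1)*(F'*G) = t1*(Gt*E' - P'*G) + x1*(Gx*E' - R'*G)).
{ pose proof (f_equal (Rmult G) E1'). pose proof (f_equal (Rmult E') V1). lra. }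
assert (C2' : (h2*u' + r2)*(F'*G) = t2*(Gt*E' - P'*G) + x2*(Gx*E' - R'*G)).
{ pose proof (f_equal (Rmult G) E2'). pose proof (f_equal (Rmult E') V2). lra. }
assert (C3' : (h3*u' + r3)*(F'*G) = t3*(Gt*E' - P'*G) + x3*(Gx*E' - R'*G)).
{ pose proof (f_equal (Rmult G) E3'). pose proof (f_equal (Rmult E') V3). lra. }
assert (FG : F*G <> 0) by (apply Rmult_integral_contrapositive; auto).
assert (FG' : F'*G <> 0) by (apply Rmult_integral_contrapositive; auto).
set (c := ((Gt*E - P*G)/(F*G) - (Gt*E' - P'*G)/(F'*G))/(u-u')).
set (d := ((Gx*E - R*G)/(F*G) - (Gx*E' - R'*G)/(F'*G))/(u-u')).
pose proof (span_of _ _ _ _ 0 0 0 0 _ _ _ _ _ _ _ _ FG FG' Hu C1 C1') as S1.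
pose proof (span_of _ _ _ _ 0 0 0 0 _ _ _ _ _ _ _ _ FG FG' Hu C2 C2') as S2.
pose proof (span_of _ _ _ _ 0 0 0 0 _ _ _ _ _ _ _ _ FG FG' Hu C3 C3') as S3.
fold c d in S1, S2, S3.
apply NB. apply (cone_span t1 t2 t3 x1 x2 x3 (c - g) d G).
- eapply cone_of; eauto.
- eapply cone_of; eauto.
- auto.
- rewrite S1 in HG1. lra.
- rewrite S3 in HG2. lra.
- rewrite S2 in HG3. lra.
Qed.

Lemma HG_alg (t1 t2 t3 a1 a2 a3 x1 x2 x3 d1 d2 d3 h1 h2 h3 g gt G : R) :
  t1*a2 - t2*a1 = t1 -> t2*a3 - t3*a2 = t3 -> t1*a3 - t3*a1 = 2*t2 ->
  t1*d2 - t2*d1 = h1 -> t2*d3 - t3*d2 = h3 -> t1*d3 - t3*d1 = 2*h2 ->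
  d1 = a1*g + t1*gt + x1*G -> d2 = a2*g + t2*gt + x2*G -> d3 = a3*g + t3*gt + x3*G ->
  h1 = g*t1 + G*(t1*x2 - t2*x1) /\ h3 = g*t3 + G*(t2*x3 - t3*x2) /\ 2*h2 = 2*g*t2 + G*(t1*x3 - t3*x1).
Proof. intros F1 F2 F3 H1 H2 H3 D1 D2 D3. subst d1 d2 d3.
pose proof (f_equal (Rmult g) F1). pose proof (f_equal (Rmult g) F2). pose proof (f_equal (Rmult g) F3).
repeat split; lra. Qed.

Lemma hsep (Ti Tj dhi dhj rti rtj Xi Xj rxi rxj hi hj ri rj k hk rk u u' : R) : u <> u' ->
 Ti*(dhj*u + rtj) + Xi*rxj + (hi*u + ri)*hj - (Tj*(dhi*u + rti) + Xj*rxi + (hj*u + rj)*hi) = k*(hk*u + rk) ->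
 Ti*(dhj*u' + rtj) + Xi*rxj + (hi*u' + ri)*hj - (Tj*(dhi*u' + rti) + Xj*rxi + (hj*u' + rj)*hi) = k*(hk*u' + rk) ->
 Ti*dhj - Tj*dhi = k*hk.
Proof. intros Hu E1 E2.
assert (H : (u - u') * (Ti*dhj - Tj*dhi - k*hk) = 0) by lra.
apply Rmult_integral in H. destruct H as [H|H]; lra. Qed.

Theorem theorem6 :
  forall (t0 t1 x0 x1 u0 u1 : R) (g : R -> R -> R) (f : R -> R -> R -> R),
    t0 < t1 -> x0 < x1 -> u0 < u1 ->
    smooth_box t0 t1 x0 x1 u0 u1 (fun t x _ => g t x) ->
    smooth_box t0 t1 x0 x1 u0 u1 f ->
    (forall t x, t0 < t < t1 -> x0 < x < x1 -> Derive (fun s => g t s) x <> 0) ->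
    (forall t x u, in_box t0 t1 x0 x1 u0 u1 t x u ->
       Derive (fun s => Derive (fun v => f t x v) s) u <> 0) ->
    ~ (exists Q1 Q2 Q3 : vfield,
         (forall Q, Q = Q1 \/ Q = Q2 \/ Q = Q3 ->
            smooth_box t0 t1 x0 x1 u0 u1 (vt Q) /\
            smooth_box t0 t1 x0 x1 u0 u1 (vx Q) /\
            smooth_box t0 t1 x0 x1 u0 u1 (vu Q) /\
            special_form t0 t1 x0 x1 u0 u1 Q /\
            is_symmetry t0 t1 x0 x1 u0 u1 g f Q) /\
         lin_indep3 t0 t1 x0 x1 u0 u1 Q1 Q2 Q3 /\
         (so3_relations t0 t1 x0 x1 u0 u1 Q1 Q2 Q3 \/
          sl2_relations t0 t1 x0 x1 u0 u1 Q1 Q2 Q3)).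
Proof.
intros t0 t1 x0 x1 u0 u1 g f Ht Hx Hu Sg Sf HGx Hfuu [Q1 [Q2 [Q3 [HQ [Hli Hrel]]]]].
destruct (HQ Q1 (or_introl eq_refl)) as (St1&Sx1&Su1&[ta1 [xa1 [ha1 [ra1 HF1]]]]&Sy1).
destruct (HQ Q2 (or_intror (or_introl eq_refl))) as (St2&Sx2&Su2&[ta2 [xa2 [ha2 [ra2 HF2]]]]&Sy2).
destruct (HQ Q3 (or_intror (or_intror eq_refl))) as (St3&Sx3&Su3&[ta3 [xa3 [ha3 [ra3 HF3]]]]&Sy3).
clear HQ.
set (tm := (t0+t1)/2). set (xm := (x0+x1)/2).
set (ua := (2*u0+u1)/3). set (ub := (u0+2*u1)/3).
assert (Htm : t0 < tm < t1) by (unfold tm; lra).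
assert (Hxm : x0 < xm < x1) by (unfold xm; lra).
assert (Hua : u0 < ua < u1) by (unfold ua; lra).
assert (Hub : u0 < ub < u1) by (unfold ub; lra).
assert (Huab : ua <> ub) by (unfold ua, ub; lra).
assert (Bx : forall t x u, t0 < t < t1 -> x0 < x < x1 -> u0 < u < u1 -> in_box t0 t1 x0 x1 u0 u1 t x u)
  by (intros; repeat split; tauto).
pose proof (Qbr _ _ _ _ _ _ Q1 Q2 _ _ _ _ _ _ _ _ St1 Sx1 Su1 HF1 St2 Sx2 Su2 HF2) as B12.
pose proof (Qbr _ _ _ _ _ _ Q2 Q3 _ _ _ _ _ _ _ _ St2 Sx2 Su2 HF2 St3 Sx3 Su3 HF3) as B23.
pose proof (Qbr _ _ _ _ _ _ Q1 Q3 _ _ _ _ _ _ _ _ St1 Sx1 Su1 HF1 St3 Sx3 Su3 HF3) as B13.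
pose proof (Qbr _ _ _ _ _ _ Q3 Q1 _ _ _ _ _ _ _ _ St3 Sx3 Su3 HF3 St1 Sx1 Su1 HF1) as B31.
assert (FIN : (forall t x u, in_box t0 t1 x0 x1 u0 u1 t x u ->
    vt Q1 t x u = 0 /\ vx Q1 t x u = 0 /\ vu Q1 t x u = 0) -> False).
{ intros Z. destruct (Hli 1 0 0) as [H _].
  - intros t x u Hb. unfold lincomb3, vf_zero. cbn -[Derive]. destruct (Z _ _ _ Hb) as (->&->&->).
    repeat split; ring.
  - lra. }
destruct Hrel as [[R12 [R23 R31]] | [R12 [R23 R13]]].
-
  assert (Tz : forall t, t0 < t < t1 -> ta1 t = 0 /\ ta2 t = 0 /\ ta3 t = 0).
  { intros t Ht'. pose proof (Bx t xm ua Ht' Hxm Hua) as Hb.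
    destruct (R12 t xm ua Hb) as (E12&_&_). destruct (R23 t xm ua Hb) as (E23&_&_).
    destruct (R31 t xm ua Hb) as (E31&_&_).
    destruct (B12 t xm ua Hb) as (V12&_&_). destruct (B23 t xm ua Hb) as (V23&_&_).
    destruct (B31 t xm ua Hb) as (V31&_&_).
    destruct (HF1 _ _ _ Hb) as (W1&_&_). destruct (HF2 _ _ _ Hb) as (W2&_&_). destruct (HF3 _ _ _ Hb) as (W3&_&_).
    apply (so3alg _ _ _ (Derive ta1 t) (Derive ta2 t) (Derive ta3 t)); lra. }
  assert (Xz : forall x, x0 < x < x1 -> xa1 x = 0 /\ xa2 x = 0 /\ xa3 x = 0).
  { intros x Hx'. pose proof (Bx tm x ua Htm Hx' Hua) as Hb.
    destruct (R12 tm x ua Hb) as (_&E12&_). destruct (R23 tm x ua Hb) as (_&E23&_).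
    destruct (R31 tm x ua Hb) as (_&E31&_).
    destruct (B12 tm x ua Hb) as (_&V12&_). destruct (B23 tm x ua Hb) as (_&V23&_).
    destruct (B31 tm x ua Hb) as (_&V31&_).
    destruct (HF1 _ _ _ Hb) as (_&W1&_). destruct (HF2 _ _ _ Hb) as (_&W2&_). destruct (HF3 _ _ _ Hb) as (_&W3&_).
    apply (so3alg _ _ _ (Derive xa1 x) (Derive xa2 x) (Derive xa3 x)); lra. }
  apply FIN. intros t x u Hb.
  destruct (Tz t ltac:(apply Hb)) as (z1&z2&z3). destruct (Xz x ltac:(apply Hb)) as (y1&y2&y3).
  destruct (R12 t x u Hb) as (_&_&E12). destruct (R23 t x u Hb) as (_&_&E23).
  destruct (R31 t x u Hb) as (_&_&E31).
  destruct (B12 t x u Hb) as (_&_&V12). destruct (B23 t x u Hb) as (_&_&V23).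
  destruct (B31 t x u Hb) as (_&_&V31).
  destruct (HF1 _ _ _ Hb) as (W1&W1'&W1''). destruct (HF2 _ _ _ Hb) as (_&_&W2). destruct (HF3 _ _ _ Hb) as (_&_&W3).
  rewrite z1, z2, z3, y1, y2, y3 in *.
  destruct (so3alg (ha1 t * u + ra1 t x) (ha2 t * u + ra2 t x) (ha3 t * u + ra3 t x) (ha1 t) (ha2 t) (ha3 t))
    as (U1&_&_); try lra.
-
  assert (F1 : forall t, t0 < t < t1 ->
     ta1 t * Derive ta2 t - ta2 t * Derive ta1 t = ta1 t /\
     ta2 t * Derive ta3 t - ta3 t * Derive ta2 t = ta3 t /\
     ta1 t * Derive ta3 t - ta3 t * Derive ta1 t = 2 * ta2 t).
  { intros t Ht'. pose proof (Bx t xm ua Ht' Hxm Hua) as Hb.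
    destruct (R12 t xm ua Hb) as (E12&_&_). destruct (R23 t xm ua Hb) as (E23&_&_).
    destruct (R13 t xm ua Hb) as (E13&_&_).
    destruct (B12 t xm ua Hb) as (V12&_&_). destruct (B23 t xm ua Hb) as (V23&_&_).
    destruct (B13 t xm ua Hb) as (V13&_&_).
    destruct (HF1 _ _ _ Hb) as (W1&_&_). destruct (HF2 _ _ _ Hb) as (W2&_&_). destruct (HF3 _ _ _ Hb) as (W3&_&_).
    rewrite V12 in E12; rewrite V23 in E23; rewrite V13 in E13.
    change (vt (scale_vf 2 Q2) ?a ?b ?c) with (2 * vt Q2 a b c) in E13.
    change (vx (scale_vf 2 Q2) ?a ?b ?c) with (2 * vx Q2 a b c) in E13. lra. }
  assert (F2 : forall x, x0 < x < x1 ->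
     xa1 x * Derive xa2 x - xa2 x * Derive xa1 x = xa1 x /\
     xa2 x * Derive xa3 x - xa3 x * Derive xa2 x = xa3 x /\
     xa1 x * Derive xa3 x - xa3 x * Derive xa1 x = 2 * xa2 x).
  { intros x Hx'. pose proof (Bx tm x ua Htm Hx' Hua) as Hb.
    destruct (R12 tm x ua Hb) as (_&E12&_). destruct (R23 tm x ua Hb) as (_&E23&_).
    destruct (R13 tm x ua Hb) as (_&E13&_).
    destruct (B12 tm x ua Hb) as (_&V12&_). destruct (B23 tm x ua Hb) as (_&V23&_).
    destruct (B13 tm x ua Hb) as (_&V13&_).
    destruct (HF1 _ _ _ Hb) as (_&W1&_). destruct (HF2 _ _ _ Hb) as (_&W2&_). destruct (HF3 _ _ _ Hb) as (_&W3&_).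
    rewrite V12 in E12; rewrite V23 in E23; rewrite V13 in E13.
    change (vt (scale_vf 2 Q2) ?a ?b ?c) with (2 * vt Q2 a b c) in E13.
    change (vx (scale_vf 2 Q2) ?a ?b ?c) with (2 * vx Q2 a b c) in E13. lra. }
  assert (UR : forall t x u, in_box t0 t1 x0 x1 u0 u1 t x u ->
    ta1 t * (Derive ha2 t * u + Derive (fun y => ra2 y x) t) + xa1 x * Derive (ra2 t) x + (ha1 t * u + ra1 t x) * ha2 t
    - (ta2 t * (Derive ha1 t * u + Derive (fun y => ra1 y x) t) + xa2 x * Derive (ra1 t) x + (ha2 t * u + ra2 t x) * ha1 t)
    = 1 * (ha1 t * u + ra1 t x) /\
    ta2 t * (Derive ha3 t * u + Derive (fun y => ra3 y x) t) + xa2 x * Derive (ra3 t) x + (ha2 t * u + ra2 t x) * ha3 t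
    - (ta3 t * (Derive ha2 t * u + Derive (fun y => ra2 y x) t) + xa3 x * Derive (ra2 t) x + (ha3 t * u + ra3 t x) * ha2 t)
    = 1 * (ha3 t * u + ra3 t x) /\
    ta1 t * (Derive ha3 t * u + Derive (fun y => ra3 y x) t) + xa1 x * Derive (ra3 t) x + (ha1 t * u + ra1 t x) * ha3 t
    - (ta3 t * (Derive ha1 t * u + Derive (fun y => ra1 y x) t) + xa3 x * Derive (ra1 t) x + (ha3 t * u + ra3 t x) * ha1 t)
    = 2 * (ha2 t * u + ra2 t x)).
  { intros t x u Hb.
    destruct (R12 t x u Hb) as (_&_&E12). destruct (R23 t x u Hb) as (_&_&E23).
    destruct (R13 t x u Hb) as (_&_&E13).
    destruct (B12 t x u Hb) as (_&_&V12). destruct (B23 t x u Hb) as (_&_&V23).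
    destruct (B13 t x u Hb) as (_&_&V13).
    destruct (HF1 _ _ _ Hb) as (_&_&W1). destruct (HF2 _ _ _ Hb) as (_&_&W2). destruct (HF3 _ _ _ Hb) as (_&_&W3).
    change (vu (scale_vf 2 Q2) ?a ?b ?c) with (2 * vu Q2 a b c) in E13. rewrite <- V12, <- V23, <- V13, E12, E23, E13, W1, W2, W3. repeat split; ring. }
  assert (F3 : forall t x, t0 < t < t1 -> x0 < x < x1 ->
     ta1 t * Derive ha2 t - ta2 t * Derive ha1 t = ha1 t /\
     ta2 t * Derive ha3 t - ta3 t * Derive ha2 t = ha3 t /\
     ta1 t * Derive ha3 t - ta3 t * Derive ha1 t = 2 * ha2 t).
  { intros t x Ht' Hx'.
    destruct (UR t x ua (Bx _ _ _ Ht' Hx' Hua)) as (A1&A2&A3).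
    destruct (UR t x ub (Bx _ _ _ Ht' Hx' Hub)) as (B1&B2&B3).
    pose proof (hsep _ _ _ _ _ _ _ _ _ _ _ _ _ _ _ _ _ _ _ Huab A1 B1).
    pose proof (hsep _ _ _ _ _ _ _ _ _ _ _ _ _ _ _ _ _ _ _ Huab A2 B2).
    pose proof (hsep _ _ _ _ _ _ _ _ _ _ _ _ _ _ _ _ _ _ _ Huab A3 B3).
    lra. }
  pose proof (Qdata _ _ _ _ _ _ Q1 ta1 xa1 ha1 ra1 St1 Sx1 Su1 HF1) as QD1.
  pose proof (Qdata _ _ _ _ _ _ Q2 ta2 xa2 ha2 ra2 St2 Sx2 Su2 HF2) as QD2.
  pose proof (Qdata _ _ _ _ _ _ Q3 ta3 xa3 ha3 ra3 St3 Sx3 Su3 HF3) as QD3.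
  assert (F4 : forall t x, t0 < t < t1 -> x0 < x < x1 ->
     Derive ha1 t = Derive ta1 t * g t x + ta1 t * Derive (fun s => g s x) t + xa1 x * Derive (fun s => g t s) x /\
     Derive ha2 t = Derive ta2 t * g t x + ta2 t * Derive (fun s => g s x) t + xa2 x * Derive (fun s => g t s) x /\
     Derive ha3 t = Derive ta3 t * g t x + ta3 t * Derive (fun s => g s x) t + xa3 x * Derive (fun s => g t s) x).
  { intros t x Ht' Hx'. pose proof (Bx t x ua Ht' Hx' Hua) as Hb. repeat split.
    apply (Qsym _ _ _ _ _ _ g f Q1 ta1 xa1 ha1 ra1 Sg Sf St1 Sx1 Su1 HF1 Sy1 t x ua Hb).
    apply (Qsym _ _ _ _ _ _ g f Q2 ta2 xa2 ha2 ra2 Sg Sf St2 Sx2 Su2 HF2 Sy2 t x ua Hb).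
    apply (Qsym _ _ _ _ _ _ g f Q3 ta3 xa3 ha3 ra3 Sg Sf St3 Sx3 Su3 HF3 Sy3 t x ua Hb). }
  assert (HG : forall t x, t0 < t < t1 -> x0 < x < x1 ->
     ha1 t = g t x * ta1 t + Derive (fun s => g t s) x * (ta1 t * xa2 x - ta2 t * xa1 x) /\
     ha3 t = g t x * ta3 t + Derive (fun s => g t s) x * (ta2 t * xa3 x - ta3 t * xa2 x) /\
     2 * ha2 t = 2 * g t x * ta2 t + Derive (fun s => g t s) x * (ta1 t * xa3 x - ta3 t * xa1 x)).
  { intros t x Ht' Hx'. destruct (F1 t Ht') as (A1&A2&A3). destruct (F3 t x Ht' Hx') as (C1&C2&C3).
    destruct (F4 t x Ht' Hx') as (D1&D2&D3).
    apply (HG_alg _ _ _ _ _ _ _ _ _ _ _ _ _ _ _ _ _ _ A1 A2 A3 C1 C2 C3 D1 D2 D3). }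
  assert (F5 : forall t x, t0 < t < t1 -> x0 < x < x1 ->
     0 = Derive (fun s => g t s) x * ta1 t + Derive (fun s => Derive (fun y => g t y) s) x * (ta1 t * xa2 x - ta2 t * xa1 x)
         + Derive (fun s => g t s) x * (ta1 t * Derive xa2 x - ta2 t * Derive xa1 x) /\
     0 = Derive (fun s => g t s) x * ta3 t + Derive (fun s => Derive (fun y => g t y) s) x * (ta2 t * xa3 x - ta3 t * xa2 x)
         + Derive (fun s => g t s) x * (ta2 t * Derive xa3 x - ta3 t * Derive xa2 x) /\
     0 = 2 * Derive (fun s => g t s) x * ta2 t + Derive (fun s => Derive (fun y => g t y) s) x * (ta1 t * xa3 x - ta3 t * xa1 x)
         + Derive (fun s => g t s) x * (ta1 t * Derive xa3 x - ta3 t * Derive xa1 x)).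
  { intros t x Ht' Hx'. pose proof (Bx t x ua Ht' Hx' Hua) as Hb.
    assert (Ea : ex_derive (fun s => g t s) x) by apply (sm_ex _ _ _ _ _ _ _ 1 t x ua Sg ltac:(lia) Hb).
    assert (Eb : ex_derive (fun s => Derive (fun y => g t y) s) x) by
      apply (sm_ex _ _ _ _ _ _ _ 1 t x ua (sm_d3 _ _ _ _ _ _ _ 1 Sg ltac:(lia)) ltac:(lia) Hb).
    destruct (QD1 t x ua Hb) as (_&(_&Ex1&_)). destruct (QD2 t x ua Hb) as (_&(_&Ex2&_)).
    destruct (QD3 t x ua Hb) as (_&(_&Ex3&_)).
    pose proof (loc_int _ _ _ Hx') as LX.
    pose proof (derivX (fun s => g t s) (fun s => Derive (fun y => g t y) s) xa2 xa1 (ha1 t) (ta1 t) (ta1 t) (ta2 t) x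
       ltac:(apply (loc_impl _ _ _ LX); intros z Hz; cbv beta; destruct (HG t z Ht' Hz) as (K&_&_); lra) Ea Eb Ex2 Ex1) as P1.
    pose proof (derivX (fun s => g t s) (fun s => Derive (fun y => g t y) s) xa3 xa2 (ha3 t) (ta3 t) (ta2 t) (ta3 t) x
       ltac:(apply (loc_impl _ _ _ LX); intros z Hz; cbv beta; destruct (HG t z Ht' Hz) as (_&K&_); lra) Ea Eb Ex3 Ex2) as P2.
    pose proof (derivX (fun s => g t s) (fun s => Derive (fun y => g t y) s) xa3 xa1 (ha2 t) (ta2 t) (ta1 t / 2) (ta3 t / 2) x
       ltac:(apply (loc_impl _ _ _ LX); intros z Hz; cbv beta; destruct (HG t z Ht' Hz) as (_&_&K); lra) Ea Eb Ex3 Ex1) as P3.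
    cbv beta in P1, P2, P3. repeat split; lra. }
  assert (F6 : forall t x, t0 < t < t1 -> x0 < x < x1 ->
     Derive (fun s => g t s) x * xa1 x = Derive (fun s => Derive (fun y => g s y) x) t * (ta1 t * xa2 x - ta2 t * xa1 x)
         + Derive (fun s => g t s) x * (Derive ta1 t * xa2 x - Derive ta2 t * xa1 x) /\
     Derive (fun s => g t s) x * xa3 x = Derive (fun s => Derive (fun y => g s y) x) t * (ta2 t * xa3 x - ta3 t * xa2 x)
         + Derive (fun s => g t s) x * (Derive ta2 t * xa3 x - Derive ta3 t * xa2 x) /\
     2 * Derive (fun s => g t s) x * xa2 x = Derive (fun s => Derive (fun y => g s y) x) t * (ta1 t * xa3 x - ta3 t * xa1 x)
         + Derive (fun s => g t s) x * (Derive ta1 t * xa3 x - Derive ta3 t * xa1 x)).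
  { intros t x Ht' Hx'. pose proof (Bx t x ua Ht' Hx' Hua) as Hb.
    assert (Ea : ex_derive (fun s => g s x) t) by apply (sm_ex _ _ _ _ _ _ _ 0 t x ua Sg ltac:(lia) Hb).
    assert (Eb : ex_derive (fun s => Derive (fun y => g s y) x) t) by
      apply (sm_ex _ _ _ _ _ _ _ 0 t x ua (sm_d3 _ _ _ _ _ _ _ 1 Sg ltac:(lia)) ltac:(lia) Hb).
    destruct (QD1 t x ua Hb) as (_&(Et1&_&Eh1&_)). destruct (QD2 t x ua Hb) as (_&(Et2&_&Eh2&_)).
    destruct (QD3 t x ua Hb) as (_&(Et3&_&Eh3&_)).
    pose proof (loc_int _ _ _ Ht') as LT.
    assert (L1 : locally t (fun s => ha1 s = g s x * ta1 s + Derive (fun y => g s y) x * (ta1 s * xa2 x - ta2 s * xa1 x))).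
    { apply (loc_impl _ _ _ LT); intros z Hz; cbv beta; destruct (HG z x Hz Hx') as (K&_&_). lra. }
    pose proof (derivT ha1 (fun s => g s x) (fun s => Derive (fun y => g s y) x) ta1 ta1 ta2 (xa1 x) (xa2 x) t
       L1 Ea Eb Et1 Et1 Et2) as P1.
    pose proof (derivT ha3 (fun s => g s x) (fun s => Derive (fun y => g s y) x) ta3 ta2 ta3 (xa2 x) (xa3 x) t
       ltac:(apply (loc_impl _ _ _ LT); intros z Hz; cbv beta; destruct (HG z x Hz Hx') as (_&K&_); lra) Ea Eb Et3 Et2 Et3) as P2.
    pose proof (derivT ha2 (fun s => g s x) (fun s => Derive (fun y => g s y) x) ta2 ta1 ta3 (xa1 x / 2) (xa3 x / 2) t
       ltac:(apply (loc_impl _ _ _ LT); intros z Hz; cbv beta; destruct (HG z x Hz Hx') as (_&_&K); lra) Ea Eb Et2 Et1 Et3) as P3.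
    cbv beta in P1, P2, P3. destruct (F4 t x Ht' Hx') as (D1&D2&D3).
    repeat split; lra. }
  assert (S1 : forall t x, t0 < t < t1 -> x0 < x < x1 ->
     ta1 t * xa2 x - ta2 t * xa1 x = 0 /\ ta2 t * xa3 x - ta3 t * xa2 x = 0 /\ ta1 t * xa3 x - ta3 t * xa1 x = 0).
  { intros t x Ht' Hx'. pose proof (Bx t x ua Ht' Hx' Hua) as Hba. pose proof (Bx t x ub Ht' Hx' Hub) as Hbb.
    pose proof (Qeu _ _ _ _ _ _ g f Q1 ta1 xa1 ha1 ra1 Sg Sf St1 Sx1 Su1 HF1 Sy1) as QE1.
    pose proof (Qeu _ _ _ _ _ _ g f Q2 ta2 xa2 ha2 ra2 Sg Sf St2 Sx2 Su2 HF2 Sy2) as QE2.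
    pose proof (Qeu _ _ _ _ _ _ g f Q3 ta3 xa3 ha3 ra3 Sg Sf St3 Sx3 Su3 HF3 Sy3) as QE3.
    destruct (F1 t Ht') as (A1&A2&A3). destruct (F2 x Hx') as (C1&C2&C3).
    destruct (HG t x Ht' Hx') as (G1&G2&G3). destruct (F5 t x Ht' Hx') as (K1&K2&K3).
    destruct (F6 t x Ht' Hx') as (L1&L2&L3).
    exact (ALG_S1 _ _ _ _ _ _ _ _ _ _ _ _ _ _ _ _ _ _ _ _ _ _ _ _ _ _ _ _ _ _ _ _
      A1 A2 A3 C1 C2 C3 G1 G2 G3 K1 K2 K3 L1 L2 L3
      (QE1 t x ua Hba) (QE2 t x ua Hba) (QE3 t x ua Hba)
      (QE1 t x ub Hbb) (QE2 t x ub Hbb) (QE3 t x ub Hbb)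
      (HGx t x Ht' Hx') (Hfuu t x ua Hba) (Hfuu t x ub Hbb) Huab). }
  assert (S2 : forall t x, t0 < t < t1 -> x0 < x < x1 ->
     (ta1 t = 0 /\ ta2 t = 0 /\ ta3 t = 0) \/ (xa1 x = 0 /\ xa2 x = 0 /\ xa3 x = 0)).
  { intros t x Ht' Hx'. destruct (classic (xa1 x = 0 /\ xa2 x = 0 /\ xa3 x = 0)) as [Z|NZ]; [right; exact Z| left].
    pose proof (Bx t x ua Ht' Hx' Hua) as Hb.
    destruct (QD1 t x ua Hb) as (_&(Et1&_)). destruct (QD2 t x ua Hb) as (_&(Et2&_)).
    destruct (QD3 t x ua Hb) as (_&(Et3&_)).
    pose proof (loc_int _ _ _ Ht') as LT.
    assert (D1 : Derive ta1 t * xa2 x - Derive ta2 t * xa1 x = 0).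
    { apply derivB; auto. apply (loc_impl _ _ _ LT). intros z Hz; cbv beta. apply (S1 z x Hz Hx'). }
    assert (D2 : Derive ta2 t * xa3 x - Derive ta3 t * xa2 x = 0).
    { apply derivB; auto. apply (loc_impl _ _ _ LT). intros z Hz; cbv beta. apply (S1 z x Hz Hx'). }
    assert (D3 : Derive ta1 t * xa3 x - Derive ta3 t * xa1 x = 0).
    { apply derivB; auto. apply (loc_impl _ _ _ LT). intros z Hz; cbv beta. apply (S1 z x Hz Hx'). }
    destruct (S1 t x Ht' Hx') as (B1&B2&B3).
    destruct (par_two _ _ _ _ _ _ _ _ _ B1 B2 B3 D1 D2 D3 NZ) as (P1&P2&P3).
    destruct (F1 t Ht') as (A1&A2&A3).
    exact (C_zero _ _ _ _ _ _ A1 A2 A3 P1 P2 P3). }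
  assert (S3 : (forall t, t0 < t < t1 -> ta1 t = 0 /\ ta2 t = 0 /\ ta3 t = 0) \/
               (forall x, x0 < x < x1 -> xa1 x = 0 /\ xa2 x = 0 /\ xa3 x = 0)).
  { destruct (classic (forall t, t0 < t < t1 -> ta1 t = 0 /\ ta2 t = 0 /\ ta3 t = 0)) as [Y|N]; [left; exact Y| right].
    apply not_all_ex_not in N. destruct N as [t N].
    apply imply_to_and in N. destruct N as [Ht' N].
    intros x Hx'. destruct (S2 t x Ht' Hx') as [Z|Z]; [contradiction|exact Z]. }
  assert (TZ : forall t, t0 < t < t1 -> ta1 t = 0 /\ ta2 t = 0 /\ ta3 t = 0).
  { destruct S3 as [Y|Y]; [exact Y|].
    intros t Ht'. destruct (F5 t xm Ht' Hxm) as (K1&K2&K3).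
    destruct (Y xm Hxm) as (y1&y2&y3).
    assert (LX : locally xm (fun z => x0 < z < x1)) by (apply loc_int; auto).
    assert (d1 : Derive xa1 xm = 0).
    { apply (Derive_loc_const _ _ 0). apply (loc_impl _ _ _ LX). intros z Hz; cbv beta. apply (Y z Hz). }
    assert (d2 : Derive xa2 xm = 0).
    { apply (Derive_loc_const _ _ 0). apply (loc_impl _ _ _ LX). intros z Hz; cbv beta. apply (Y z Hz). }
    assert (d3' : Derive xa3 xm = 0).
    { apply (Derive_loc_const _ _ 0). apply (loc_impl _ _ _ LX). intros z Hz; cbv beta. apply (Y z Hz). }
    rewrite y1, y2, y3, d1, d2, d3' in *.
    pose proof (HGx t xm Ht' Hxm) as HG0.
    assert (Z1 : Derive (fun s => g t s) xm * ta1 t = 0) by lra.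
    assert (Z2 : Derive (fun s => g t s) xm * ta2 t = 0) by lra.
    assert (Z3 : Derive (fun s => g t s) xm * ta3 t = 0) by lra.
    apply Rmult_integral in Z1, Z2, Z3. intuition. }
  assert (XZ : forall x, x0 < x < x1 -> xa1 x = 0 /\ xa2 x = 0 /\ xa3 x = 0).
  { intros x Hx'. destruct (F6 tm x Htm Hx') as (K1&K2&K3).
    destruct (TZ tm Htm) as (y1&y2&y3).
    assert (LT : locally tm (fun z => t0 < z < t1)) by (apply loc_int; auto).
    assert (d1 : Derive ta1 tm = 0).
    { apply (Derive_loc_const _ _ 0). apply (loc_impl _ _ _ LT). intros z Hz; cbv beta. apply (TZ z Hz). }
    assert (d2 : Derive ta2 tm = 0).
    { apply (Derive_loc_const _ _ 0). apply (loc_impl _ _ _ LT). intros z Hz; cbv beta. apply (TZ z Hz). }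
    assert (d3' : Derive ta3 tm = 0).
    { apply (Derive_loc_const _ _ 0). apply (loc_impl _ _ _ LT). intros z Hz; cbv beta. apply (TZ z Hz). }
    rewrite y1, y2, y3, d1, d2, d3' in *.
    pose proof (HGx tm x Htm Hx') as HG0.
    assert (Z1 : Derive (fun s => g tm s) x * xa1 x = 0) by lra.
    assert (Z2 : Derive (fun s => g tm s) x * xa2 x = 0) by lra.
    assert (Z3 : Derive (fun s => g tm s) x * xa3 x = 0) by lra.
    apply Rmult_integral in Z1, Z2, Z3. intuition. }
  apply FIN. intros t x u Hb.
  destruct Hb as (Ht'&Hx'&Hu') eqn:Hb'.
  destruct (TZ t Ht') as (z1&z2&z3). destruct (XZ x Hx') as (y1&y2&y3).
  destruct (HG t x Ht' Hx') as (G1&G2&G3).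
  rewrite z1, z2, z3, y1, y2, y3 in *.
  assert (h1z : ha1 t = 0) by lra. assert (h2z : ha2 t = 0) by lra. assert (h3z : ha3 t = 0) by lra.
  destruct (UR t x u Hb) as (U1&_&_).
  rewrite z1, z2, y1, y2, h1z, h2z in U1.
  destruct (HF1 _ _ _ Hb) as (W1&W2&W3). rewrite W1, W2, W3, z1, y1, h1z.
  repeat split; lra.
Qed.
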